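(* Let $U(0)\geqslant 1$ and $d\geqslant 1$ be integers, $U(n)=U(0)+nd$, and let $S(n)=\overline{U(0)U(1)\cdots U(n-1)U(n)U(n-1)\cdots U(1)U(0)}$ for $n\geqslant 0$ (so $S(0)=U(0)$). Let $n\geqslant 0$ and put $$l=\left\lceil \log_{10}(n d + S(0) + 1)\right\rceil,\qquad t_l=\left\lfloor \frac{10^{l-1}-S(0)}{d}\right\rfloor .$$ Assume $t_l\geqslant 0$, $U(t_l)\geqslant 10^{l-1}$ and $U(t_l+2)<10^l$. Let $s_0=S(t_l)$, $s_1=S(t_l+1)$, $s_2=S(t_l+2)$, and $$\alpha_l=\frac{10^{3l}s_0-10^l(10^l+1)s_1+s_2}{(10^l+1)(10^l-1)^2},\qquad \mu_l=-\frac{10^{2l}s_0-(10^{2l}+1)s_1+s_2}{10^l(10^l-1)^2},$$ $$\theta_l=\frac{10^l s_0-(10^l+1)s_1+s_2}{10^l(10^l+1)(10^l-1)^2}.$$ Then $$S(n)=\alpha_l+\mu_l\,10^{l(n-t_l)}+\theta_l\,10^{2l(n-t_l)}.$$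
   Context: For positive integers $a_0,\ldots,a_k$, $\overline{a_0a_1\cdots a_k}$ denotes the integer whose decimal expansion is the decimal expansion of $a_0$ followed by that of $a_1$, ..., followed by that of $a_k$. Note $l$ is the number of decimal digits of $U(n)$; e.g. for $U(n)=n+1$ the sequence $S$ is $1,121,12321,1234321,\ldots$. *)

(* Defs.v *)
From mathcomp Require Import all_boot all_order all_algebra.
Set Implicit Arguments. Unset Strict Implicit. Unset Printing Implicit Defensive.
Import Order.TTheory GRing.Theory Num.Theory.

(* number of decimal digits of a positive integer a:
   the least e with a < 10^e (= ceil(log10(a+1))) *)
Definition ndigits (a : nat) : nat := up_log 10 a.+1.

Definition concat_digits (s : seq nat) : nat :=
  foldl (fun acc a => acc * 10 ^ ndigits a + a) 0 s.

Definition U (U0 d n : nat) : nat := U0 + n * d.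

Definition Spal (U0 d n : nat) : nat :=
  concat_digits ([seq U U0 d i | i <- iota 0 n] ++ [:: U U0 d n]
                 ++ rev [seq U U0 d i | i <- iota 0 n]).

(* Main.v *)
Require Import Defs.
From mathcomp Require Import all_boot all_order all_algebra.
From mathcomp Require Import ring.
Import Order.TTheory GRing.Theory Num.Theory.

Definition Wd (s : seq nat) : nat := sumn (map ndigits s).

Lemma foldl_cd (a : nat) (s : seq nat) :
  foldl (fun acc a => acc * 10 ^ ndigits a + a) a s = (a * 10 ^ Wd s + concat_digits s)%N.
Proof.
elim: s a => [|x s IH] a /=; first by rewrite /Wd /concat_digits /= muln1 addn0.
rewrite /= IH [in RHS]/concat_digits /= IH /Wd /= expnD mul0n add0n mulnDl mulnA.
by rewrite addnA.
Qed.

Lemma concat_cat (s t : seq nat) :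
  concat_digits (s ++ t) = (concat_digits s * 10 ^ Wd t + concat_digits t)%N.
Proof. by rewrite {1}/concat_digits foldl_cat foldl_cd. Qed.

Lemma concat1 x : concat_digits [:: x] = x.
Proof. by rewrite /concat_digits /= mul0n add0n. Qed.

Definition ms U0 d k := [seq U U0 d i | i <- iota 0 k].
Definition Hn U0 d k := concat_digits (ms U0 d k ++ [:: U U0 d k]).
Definition Rn U0 d k := concat_digits (rev (ms U0 d k)).

Lemma msS U0 d k : ms U0 d k.+1 = ms U0 d k ++ [:: U U0 d k].
Proof. by rewrite /ms -addn1 iotaD map_cat. Qed.

Lemma SpalE U0 d k : Spal U0 d k = (Hn U0 d k * 10 ^ Wd (ms U0 d k) + Rn U0 d k)%N.
Proof.
rewrite /Spal catA concat_cat /Hn /Rn /Wd map_rev sumn_rev //.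
Qed.

Lemma HnS U0 d k : Hn U0 d k.+1 = (Hn U0 d k * 10 ^ ndigits (U U0 d k.+1) + U U0 d k.+1)%N.
Proof.
by rewrite /Hn concat_cat concat1 msS /Wd /= addn0.
Qed.

Lemma RnS U0 d k : Rn U0 d k.+1 = (U U0 d k * 10 ^ Wd (ms U0 d k) + Rn U0 d k)%N.
Proof.
rewrite /Rn msS rev_cat /= -cat1s concat_cat concat1 /Wd map_rev sumn_rev //.
Qed.

Lemma WdS U0 d k : Wd (ms U0 d k.+1) = (Wd (ms U0 d k) + ndigits (U U0 d k))%N.
Proof. by rewrite msS /Wd map_cat sumn_cat /= addn0. Qed.

Local Open Scope ring_scope.

Lemma closed_form (U0 d t K l : nat) (hl : (0 < l)%N)
  (hdig : forall j, (t <= j <= K)%N -> ndigits (U U0 d j) = l) :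
  exists P Q T : rat, forall m, (t + m <= K)%N ->
    (Spal U0 d (t + m))%:R = P + Q * ((10 : rat) ^+ l) ^+ m + T * (((10 : rat) ^+ l) ^+ m) ^+ 2.
Proof.
set x : rat := (10 : rat) ^+ l.
have x1 : x - 1 != 0.
  rewrite subr_eq0 /x; apply/negP => /eqP h.
  have : ((10 ^ l)%N%:R : rat) = 1%N%:R by rewrite natrX h.
  move/eqP; rewrite eqr_nat => /eqP h2.
  have : (10 ^ 1 <= 10 ^ l)%N by rewrite leq_exp2l.
  by rewrite h2.
have x1' : 1 - x != 0 by rewrite -opprB oppr_eq0.
set c : rat := (10 ^ Wd (ms U0 d t))%N%:R.
set a : rat := (U U0 d t)%:R.
set dd : rat := d%:R.
set h0 : rat := (Hn U0 d t)%:R.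
set r0 : rat := (Rn U0 d t)%:R.
set Bc := dd / (1 - x).
set Ac := (a + dd - Bc) / (1 - x).
set Cc := h0 - Ac.
set Gc := dd * c / (x - 1).
set Fc := (a * c - Gc * x) / (x - 1).
set Ec := r0 - Fc.
have key : forall m, (t + m <= K)%N ->
  [/\ (Hn U0 d (t + m))%:R = Ac + Bc * m%:R + Cc * x ^+ m,
      (Rn U0 d (t + m))%:R = Ec + Fc * x ^+ m + Gc * m%:R * x ^+ m &
      (10 ^ Wd (ms U0 d (t + m)))%N%:R = c * x ^+ m].
  elim=> [|m IH] hm.
    rewrite addn0 expr0 /Cc /Ec /c /h0 /r0; split; ring.
  have hm' : (t + m <= K)%N by apply: leq_trans hm; rewrite addnS.
  have [IH1 IH2 IH3] := IH hm'.
  have dg1 : ndigits (U U0 d (t + m).+1) = l by apply: hdig; rewrite -addnS hm leq_addr.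
  have dg0 : ndigits (U U0 d (t + m)) = l by apply: hdig; rewrite hm' leq_addr.
  have uS : (U U0 d (t + m).+1)%:R = a + (m.+1)%:R * dd :> rat.
    by rewrite /a /dd /U !natrD !natrM !natrD; ring.
  have u0 : (U U0 d (t + m))%:R = a + m%:R * dd :> rat.
    by rewrite /a /dd /U !natrD !natrM !natrD; ring.
  rewrite addnS; split.
  - rewrite HnS natrD natrM uS IH1 dg1 natrX exprS -/x /Cc /Ac /Bc -[m.+1]addn1 natrD.
    by field.
  - rewrite RnS natrD natrM u0 IH2 IH3 exprS /Ec /Fc /Gc -[m.+1]addn1 natrD.
    by field.
  - by rewrite WdS expnD natrM IH3 dg0 natrX exprS -/x; ring.
exists Ec, (c * Ac + Fc), (c * Cc) => m hm.
have [IH1 IH2 IH3] := key m hm.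
rewrite SpalE natrD natrM IH1 IH2 IH3 /Ec /Fc /Gc /Cc /Ac /Bc.
by field; apply/andP.
Qed.

Lemma alg (L P Q T y : rat) : L != 0 -> L - 1 != 0 -> L + 1 != 0 ->
  let s0 := P + Q * L ^+ 0 + T * L ^+ 0 ^+ 2 in
  let s1 := P + Q * L ^+ 1 + T * L ^+ 1 ^+ 2 in
  let s2 := P + Q * L ^+ 2 + T * L ^+ 2 ^+ 2 in
  P + Q * y + T * y ^+ 2 =
  (L ^+ 3 * s0 - L * (L + 1) * s1 + s2) / ((L + 1) * (L - 1) ^+ 2) +
  - ((L ^+ 2 * s0 - (L ^+ 2 + 1) * s1 + s2) / (L * (L - 1) ^+ 2)) * y +
  (L * s0 - (L + 1) * s1 + s2) / (L * (L + 1) * (L - 1) ^+ 2) * y ^+ 2.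
Proof.
move=> h0 h1 h2 s0 s1 s2; rewrite /s0 /s1 /s2 expr0 expr1.
field. by rewrite h0 h1 h2.
Qed.

Theorem theorem3 (U0 d n : nat) (hU0 : (1 <= U0)%N) (hd : (1 <= d)%N) :
  let S0 := Spal U0 d 0 in
  (* l = ceil(log10(n d + S(0) + 1)) : least l with n d + S(0) + 1 <= 10^l *)
  let l := up_log 10 (n * d + S0 + 1) in
  let tl : int := Num.floor (((10 ^ l.-1)%:R - S0%:R) / d%:R : rat) in
  0 <= tl ->
  ((10 ^ l.-1)%N <= U U0 d `|tl|)%N ->
  (U U0 d (`|tl|.+2) < 10 ^ l)%N ->
  let s0 : rat := (Spal U0 d `|tl|)%:R in
  let s1 : rat := (Spal U0 d `|tl|.+1)%:R in
  let s2 : rat := (Spal U0 d `|tl|.+2)%:R in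
  let L : rat := 10 ^+ l in
  let alpha := (L ^+ 3 * s0 - L * (L + 1) * s1 + s2) / ((L + 1) * (L - 1) ^+ 2) in
  let mu := - ((L ^+ 2 * s0 - (L ^+ 2 + 1) * s1 + s2) / (L * (L - 1) ^+ 2)) in
  let theta := (L * s0 - (L + 1) * s1 + s2) / (L * (L + 1) * (L - 1) ^+ 2) in
  let e : int := (l%:Z * (n%:Z - tl))%R in
  (Spal U0 d n)%:R = alpha + mu * (10 : rat) ^ e + theta * (10 : rat) ^ (2 * e).
Proof.
move=> S0 l tl tl0 hlo hhi s0 s1 s2 L alpha mu theta e.
have S0E : S0 = U0 by rewrite /S0 /Spal /= concat1 /U mul0n addn0.
set t := `|tl|%N.
have tlE : tl = t%:Z by rewrite /t gez0_abs.
have lgt0 : (0 < l)%N by rewrite /l up_log_gt0 /= S0E addn1 ltnS addn_gt0 hU0 orbT.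
have hup : (n * d + S0 + 1 <= 10 ^ l)%N by apply: up_logP.
have hlow : (10 ^ l.-1 < n * d + S0 + 1)%N.
  by apply: up_log_gtn => //; rewrite S0E addn1 ltnS addn_gt0 hU0 orbT.
have hfl : (t * d + U0 <= 10 ^ l.-1)%N.
  have := floor_le (((10 ^ l.-1)%:R - S0%:R) / d%:R : rat).
  rewrite -/tl tlE ler_pdivlMr ?ltr0n // lerBrDr -natrM -natrD ler_nat.
  by rewrite S0E.
have tn : (t <= n)%N.
  rewrite -(leq_pmul2r hd) -(leq_add2r U0).
  apply: leq_trans hfl _; rewrite -ltnS -S0E; by rewrite addn1 in hlow.
set K := maxn n t.+2.
have hdig : forall j, (t <= j <= K)%N -> ndigits (U U0 d j) = l.
  move=> j /andP[h1 h2].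
  rewrite /ndigits -(prednK lgt0); apply: up_log_eq => //.
  apply/andP; split.
    rewrite ltnS; apply: leq_trans hlo _.
    by rewrite /U leq_add2l leq_mul2r h1 orbT.
  rewrite (prednK lgt0).
  have hK : (U U0 d K < 10 ^ l)%N.
    rewrite /K; case: (leqP n t.+2) => hh.
      by [].
    idtac.
    by rewrite /U addnC -addn1 -S0E.
  by apply: leq_ltn_trans hK; rewrite /U leq_add2l leq_mul2r h2 orbT.
have [P [Q [T HPQT]]] := @closed_form U0 d t K l lgt0 hdig.
have hS : forall m, (t + m <= K)%N -> (Spal U0 d (t + m))%:R =
    P + Q * ((10 : rat) ^+ l) ^+ m + T * (((10 : rat) ^+ l) ^+ m) ^+ 2 by [].
have k2 : (t + 2 <= K)%N by rewrite addn2 /K leq_maxr.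
have h0 := hS 0%N ltac:(by apply: leq_trans k2; rewrite leq_add2l).
have h1 := hS 1%N ltac:(by apply: leq_trans k2; rewrite leq_add2l).
have h2 := hS 2%N k2.
have hn := hS (n - t)%N ltac:(by rewrite (subnKC tn) /K leq_maxl).
rewrite addn0 in h0; rewrite addn1 in h1; rewrite addn2 in h2.
rewrite (subnKC tn) in hn.
have eE : e = Posz (l * (n - t)) by rewrite /e tlE subzn // PoszM.
have e2E : (2 * e)%R = Posz ((l * (n - t)) * 2) by rewrite eE mulnC !PoszM mulrC.
have p1 : (10:rat) ^+ (l * (n - t)) = L ^+ (n - t) by rewrite exprM.
have p2 : (10:rat) ^+ (l * (n - t) * 2) = (L ^+ (n - t)) ^+ 2 by rewrite !exprM.
rewrite e2E eE -!exprnP p2 p1.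
rewrite hn /alpha /mu /theta /s0 /s1 /s2 h0 h1 h2 -/L.
have Lgt1 : 1 < L.
  rewrite /L -natrX ltr1n.
  by rewrite -{1}(expn0 10) ltn_exp2l.
have L0 : L != 0 by rewrite gt_eqF // (lt_trans ltr01 Lgt1).
have L1 : L - 1 != 0 by rewrite subr_eq0 gt_eqF.
have L2 : L + 1 != 0 by rewrite gt_eqF // ltr_wpDr ?ler01 // (lt_trans ltr01 Lgt1).
exact: (alg L P Q T (L ^+ (n - t)) L0 L1 L2).
Qed.
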